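(* Let $G=G(m,p,n)$ where $m$ is odd or twice an odd integer, and let $P=P_{(0,\lambda)}$ be the standard parabolic subgroup for a partition $\lambda$ of $n$. Then there is a set $J$ of vectors, each a root of a reflection in $P$, such that $N_G(P)=P\rtimes G_J$, where $G_J$ is the setwise stabiliser of $J$ in $G$.
   Context: Let $m,p,n$ be positive integers with $p\mid m$, let $V=\mathbb{C}^n$ with the standard positive definite Hermitian form and orthonormal basis $e_1,\dots,e_n$, and let $\boldsymbol\mu_m$ be the group of complex $m$th roots of unity. $G(m,p,n)$ is the group of linear maps of $V$ of the form $e_i\mapsto\theta_ie_{\sigma(i)}$ with $\sigma\in\mathrm{Sym}(n)$, $\theta_i\in\boldsymbol\mu_m$ and $(\theta_1\cdots\theta_n)^{m/p}=1$. For a partition $\lambda=(n_1\ge\dots\ge n_d)$ of $n$ put $k_0=0$, $k_i=n_1+\cdots+n_i$ and $\Lambda_i=\{e_j:k_{i-1}<j\le k_i\}$; the standard parabolic subgroup $P_{(0,\lambda)}=\prod_{i=1}^d\mathrm{Sym}(n_i)$, where $\mathrm{Sym}(n_i)$ permutes the vectors of $\Lambda_i$ and fixes the other basis vectors. A root of a reflection $r$ is a non-zero vector orthogonal to the fixed hyperplane of $r$. *)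

(* Defs.v *)
(* Elements of G(m,p,n) are represented as n x n matrices over
   algC (algebraic complex numbers) acting on column vectors 'cV_n; the basis
   vector e_(i+1) of the paper is the i-th standard column vector (0-based). *)
From HB Require Import structures.
From mathcomp Require Import all_boot all_order all_algebra all_fingroup all_field.
Unset Printing Implicit Defensive.
Unset Implicit Arguments.
Import Order.TTheory GRing.Theory Num.Theory.
Local Open Scope ring_scope.

Definition monomial_mx (n : nat) (s : 'S_n) (t : 'I_n -> algC) : 'M[algC]_n :=
  \matrix_(j, i) (if j == s i then t i else 0).

Definition Gmpn (m p n : nat) (g : 'M[algC]_n) : Prop :=
  exists (s : 'S_n) (t : 'I_n -> algC),
    (forall i, t i ^+ m = 1) /\ (\prod_i t i) ^+ (m %/ p) = 1 /\
    g = monomial_mx n s t.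

Definition is_partition (n : nat) (lam : seq nat) : Prop :=
  sorted geq lam /\ all (fun k => 0 < k)%N lam /\ sumn lam = n.

Definition psums (lam : seq nat) : seq nat :=
  [seq sumn (take i lam) | i <- iota 1 (size lam)].

(* 0-based j (i.e. e_(j+1)) lies in Lambda_(blk lam j + 1):
   k_(i-1) <= j < k_i  iff  #{i' >= 1 | k_i' <= j} = i - 1 *)
Definition blk (lam : seq nat) (j : nat) : nat := count (fun k => k <= j)%N (psums lam).

Definition Ppar (n : nat) (lam : seq nat) (g : 'M[algC]_n) : Prop :=
  exists s : 'S_n, (forall j, blk lam (s j) = blk lam j) /\
    g = monomial_mx n s (fun _ => 1).

Definition herm (n : nat) (v x : 'cV[algC]_n) : algC := \sum_i (v i 0)^* * x i 0.

(* r is a reflection: its fixed space ker(r - 1) is a hyperplane,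
   i.e. rank (r - 1) = 1 *)
Definition is_reflection (n : nat) (r : 'M[algC]_n) : Prop :=
  \rank (r - 1%:M) = 1%N.

Definition is_root_of (n : nat) (r : 'M[algC]_n) (v : 'cV[algC]_n) : Prop :=
  v != 0 /\ forall x : 'cV[algC]_n, r *m x = x -> herm n v x = 0.

Definition StabGJ (m p n : nat) (J : seq 'cV[algC]_n) (g : 'M[algC]_n) : Prop :=
  Gmpn m p n g /\ forall v : 'cV[algC]_n, (v \in J) = (g *m v \in J).

Definition NormGP (m p n : nat) (lam : seq nat) (g : 'M[algC]_n) : Prop :=
  Gmpn m p n g /\ forall x, Ppar n lam x <-> Ppar n lam (g *m x *m invmx g).

(* Main.v *)
Require Import Defs.
From HB Require Import structures.
From mathcomp Require Import all_boot all_order all_algebra all_fingroup all_field.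
From mathcomp Require Import zify ring.
Import Order.TTheory GRing.Theory Num.Theory.
Set Implicit Arguments. Unset Strict Implicit.

Lemma br n (P : pred nat) : #|[set j : 'I_n | P (val j)]| = count P (iota 0 n).
Proof.
rewrite -sum1_card -sum1_count.
rewrite (eq_bigl (fun j : 'I_n => P j)); last by move=> j; rewrite inE.
by rewrite -(big_mkord P (fun _ => 1%N)) /index_iota subn0.
Qed.

Lemma downcount (P : pred nat) : (forall i j, j <= i -> P i -> P j) ->
  forall N j, j < N -> P j = (j < count P (iota 0 N)).
Proof.
move=> dc; elim => [//|N IH] j hj.
rewrite -[N.+1]addn1 iotaD count_cat /= addn0 add0n.
have hc : count P (iota 0 N) <= N by rewrite -{2}(size_iota 0 N) count_size.
have allP : P N -> count P (iota 0 N) = N.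
  move=> PN; apply/eqP; rewrite -{2}(size_iota 0 N) -all_count.
  by apply/allP => i; rewrite mem_iota => /andP [_ hi]; apply: (dc N) => //; apply: ltnW.
case: (ltngtP j N) => [hjN | | ->].
- rewrite IH //; case PN: (P N); last by rewrite addn0.
  by rewrite allP // hjN; apply/esym; apply: ltn_addr.
- by move=> h; move: hj; rewrite ltnS leqNgt h.
- case PN: (P N); first by rewrite allP // addn1 ltnSn.
  by rewrite addn0 ltnNge hc.
Qed.

Section Blocks.
Variable lam : seq nat.
Local Notation bl := (blk lam).
Variable n : nat.

Lemma blk_mono i j : i <= j -> bl i <= bl j.
Proof. by move=> hij; apply: sub_count => k /= hk; apply: leq_trans hij. Qed.

Definition Lb b := count (fun j => bl j < b) (iota 0 n).
Definition Hb b := count (fun j => bl j <= b) (iota 0 n).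

Lemma Hb_le b : Hb b <= n.
Proof. by rewrite /Hb -{2}(size_iota 0 n) count_size. Qed.

Lemma in_blk j b : j < n -> (bl j == b) = (Lb b <= j < Hb b).
Proof.
move=> hj.
have e1 : (bl j < b) = (j < Lb b).
  apply: (downcount (P := fun j => bl j < b)) => // i k hki hi.
  exact: leq_ltn_trans (blk_mono hki) hi.
have e2 : (bl j <= b) = (j < Hb b).
  apply: (downcount (P := fun j => bl j <= b)) => // i k hki hi.
  exact: leq_trans (blk_mono hki) hi.
by rewrite -e2 leqNgt -e1 eqn_leq -leqNgt andbC.
Qed.

Lemma card_blk b : #|[set j : 'I_n | bl j == b]| = Hb b - Lb b.
Proof.
rewrite (br n (fun j => bl j == b)) /Hb /Lb.
have := count_predUI (fun j => bl j < b) (fun j => bl j == b) (iota 0 n).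
have -> : count (predI (fun j => bl j < b) (fun j => bl j == b)) (iota 0 n) = 0.
  by rewrite (eq_count (a2 := pred0)) ?count_pred0 // => j /=; case: (ltngtP (bl j) b).
have -> : count (predU (fun j => bl j < b) (fun j => bl j == b)) (iota 0 n) =
  count (fun j => bl j <= b) (iota 0 n).
  by apply: eq_count => j; rewrite /predU /= [RHS]leq_eqVlt orbC.
by rewrite addn0 => ->; rewrite addKn.
Qed.


Lemma blk_int (i : 'I_n) : Lb (bl i) <= i < Hb (bl i).
Proof. by rewrite -in_blk. Qed.

Variables (sg : 'S_n) (r : 'I_n -> bool).
Hypothesis K1 : forall a b : 'I_n, bl a = bl b -> bl (sg a) = bl (sg b).
Hypothesis K2 : forall a b : 'I_n, bl (sg a) = bl (sg b) -> bl a = bl b.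
Hypothesis hr : forall a b : 'I_n, bl a = bl b -> r a = r b.

Lemma size_eq (i : 'I_n) : Hb (bl (sg i)) - Lb (bl (sg i)) = Hb (bl i) - Lb (bl i).
Proof.
rewrite -!card_blk -(card_preimset _ (@perm_inj _ sg)); apply: eq_card => j.
rewrite !inE; apply/eqP/eqP => h; [exact: K2 h| exact: K1 h].
Qed.

Definition tval (i : 'I_n) : nat :=
  if r i then Lb (bl (sg i)) + (Hb (bl i) - 1 - i) else Lb (bl (sg i)) + (i - Lb (bl i)).

Lemma tval_in i : Lb (bl (sg i)) <= tval i < Hb (bl (sg i)).
Proof.
have := size_eq i; have := blk_int i; have := blk_int (sg i).
rewrite /tval; case: (r i); lia.
Qed.

Lemma tval_lt i : tval i < n.
Proof. have := tval_in i; have := Hb_le (bl (sg i)); lia. Qed.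

Definition tf (i : 'I_n) : 'I_n := insubd i (tval i).

Lemma tfE i : val (tf i) = tval i.
Proof. by rewrite /tf insubdK //; apply: tval_lt. Qed.

Lemma tf_blk i : bl (tf i) = bl (sg i).
Proof.
apply/eqP; rewrite in_blk ?tfE ?tval_lt //; exact: tval_in.
Qed.

Lemma tf_inj : injective tf.
Proof.
move=> i j hij.
have hb : bl i = bl j by apply: K2; rewrite -!tf_blk hij.
have := congr1 val hij; rewrite !tfE /tval (hr hb) (K1 hb) hb.
have := blk_int i; have := blk_int j; rewrite hb => hi hj.
move=> h; apply: ord_inj; move: h; case: (r j); lia.
Qed.

Definition tau : 'S_n := perm tf_inj.

Lemma tau_blk i : bl (tau i) = bl (sg i).
Proof. by rewrite permE tf_blk. Qed.

Lemma tau_ord (a b : 'I_n) : a < b -> bl a = bl b ->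
  if r a then tau b < tau a else tau a < tau b.
Proof.
move=> hab e; rewrite !permE.
have ea : nat_of_ord (tf a) = tval a := tfE a.
have eb : nat_of_ord (tf b) = tval b := tfE b.
rewrite ea eb /tval (hr e) e (K1 e).
have := blk_int a; have := blk_int b; rewrite e => ha hb.
by case: (r b); lia.
Qed.


Lemma ordpres_id (pi : 'S_n) : (forall j, bl (pi j) = bl j) ->
  (forall a b : 'I_n, a < b -> bl a = bl b -> pi a < pi b) -> pi = 1%g.
Proof.
move=> hb ho; apply/permP => i; rewrite perm1.
move: {2}(val i) (erefl (val i)) => k; elim/ltn_ind: k i => k IH i ek.
case: (ltngtP (pi i) i) => [lt|gt|eq]; last exact: ord_inj.
- have := IH (pi i) _ (pi i) erefl; rewrite -ek => /(_ lt) /perm_inj e.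
  by move: lt; rewrite e ltnn.
- set j := (pi^-1)%g i.
  have pj : pi j = i by rewrite permKV.
  case: (ltngtP j i) => [ji|ij|ji].
  + have := IH j _ j erefl; rewrite -ek => /(_ ji); rewrite pj => e.
    by move: ji; rewrite -e ltnn.
  + have e : bl i = bl j by rewrite -(hb j) pj.
    have := ho i j ij e; rewrite pj => h.
    by move: (ltn_trans h gt); rewrite ltnn.
  + by move: gt; rewrite -{1}pj (ord_inj ji) ltnn.
Qed.

End Blocks.

Local Open Scope ring_scope.

Section Mono.
Variable n : nat.
Implicit Types (s : 'S_n) (t : 'I_n -> algC).

Lemma mono_mul s t s' t' :
  monomial_mx n s t *m monomial_mx n s' t' =
  monomial_mx n (s' * s)%g (fun i => t (s' i) * t' i).
Proof.
apply/matrixP => j i; rewrite !mxE (bigD1 (s' i)) //= big1 ?addr0.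
  by rewrite !mxE eqxx permM; case: eqP; rewrite ?mul0r.
by move=> k /negPf hk; rewrite !mxE hk mulr0.
Qed.

Lemma mono_ext s t s' t' : s = s' -> t =1 t' -> monomial_mx n s t = monomial_mx n s' t'.
Proof. by move=> <- h; apply/matrixP => j i; rewrite !mxE h. Qed.

Lemma mono1 : monomial_mx n 1%g (fun _ => 1) = 1%:M.
Proof. by apply/matrixP => j i; rewrite !mxE perm1 eq_sym; case: eqP. Qed.

Lemma mono_inj s t s' t' : (forall i, t i != 0) ->
  monomial_mx n s t = monomial_mx n s' t' -> s = s' /\ t =1 t'.
Proof.
move=> nz /matrixP h.
have e i : s i = s' i /\ t i = t' i.
  have := h (s i) i; rewrite !mxE eqxx.
  by case: eqP => [->|_ ] ht; [|move: (nz i); rewrite ht eqxx].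
by split; [apply/permP => i; case: (e i)| move=> i; case: (e i)].
Qed.

Definition minv s t := fun i => (t (s^-1%g i))^-1.

Lemma mono_mulV s t : (forall i, t i != 0) ->
  monomial_mx n s t *m monomial_mx n (s^-1)%g (minv s t) = 1%:M.
Proof.
move=> nz; rewrite mono_mul -mono1; apply: mono_ext; first by rewrite mulVg.
by move=> i; rewrite /minv divff.
Qed.

Lemma mono_unit s t : (forall i, t i != 0) -> monomial_mx n s t \in unitmx.
Proof. by move=> nz; case: (mulmx1_unit (mono_mulV s nz)). Qed.

Lemma mono_inv s t : (forall i, t i != 0) ->
  invmx (monomial_mx n s t) = monomial_mx n (s^-1)%g (minv s t).
Proof.
move=> nz; have h := mono_mulV s nz.
by rewrite -[RHS]mul1mx -(mulVmx (mono_unit s nz)) -mulmxA h mulmx1.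
Qed.

Lemma minv_nz s t : (forall i, t i != 0) -> forall i, minv s t i != 0.
Proof. by move=> nz i; rewrite /minv invr_eq0. Qed.

Lemma minvK s t : (forall i, t i != 0) -> minv (s^-1)%g (minv s t) =1 t.
Proof. by move=> nz i; rewrite /minv invgK invrK permK. Qed.

Definition ev (a : 'I_n) : 'cV[algC]_n := \matrix_(i, j) (i == a)%:R.

Lemma mono_ev s t a : monomial_mx n s t *m ev a = t a *: ev (s a).
Proof.
apply/matrixP => j z; rewrite !mxE (bigD1 a) //= big1 ?addr0.
  by rewrite !mxE eqxx mulr1; case: eqP; rewrite ?mulr0 ?mulr1.
by move=> k /negPf hk; rewrite !mxE hk mulr0.
Qed.


Lemma conj_mono s t (pi : 'S_n) : (forall i, t i != 0) ->
  monomial_mx n s t *m monomial_mx n pi (fun _ => 1) *m invmx (monomial_mx n s t)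
  = monomial_mx n (s^-1 * (pi * s))%g (fun i => t (pi (s^-1%g i)) / t (s^-1%g i)).
Proof.
move=> nz; rewrite mono_inv // !mono_mul; apply: mono_ext => // i.
by rewrite mulr1.
Qed.

Variable lam : seq nat.
Local Notation bl := (blk lam).

Definition Kfwd s t := forall a b : 'I_n, bl a = bl b -> bl (s a) = bl (s b) /\ t a = t b.
Definition Kbwd s := forall a b : 'I_n, bl (s a) = bl (s b) -> bl a = bl b.

Lemma conj_P s t x : (forall i, t i != 0) -> Kfwd s t -> Ppar n lam x ->
  Ppar n lam (monomial_mx n s t *m x *m invmx (monomial_mx n s t)).
Proof.
move=> nz K [pi [hpi ->]]; rewrite conj_mono //.
exists (s^-1 * (pi * s))%g; split.
  move=> j; rewrite !permM; have [-> _] := K _ _ (hpi (s^-1%g j)).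
  by rewrite permKV.
apply: mono_ext => // i; have [_ ->] := K _ _ (hpi (s^-1%g i)).
by rewrite divff.
Qed.

Lemma conj_Pinv s t (pi : 'S_n) : (forall i, t i != 0) ->
  Ppar n lam (monomial_mx n s t *m monomial_mx n pi (fun _ => 1) *m invmx (monomial_mx n s t)) ->
  forall j, bl (s (pi j)) = bl (s j) /\ t (pi j) = t j.
Proof.
move=> nz [rho [hrho]]; rewrite conj_mono // => /mono_inj [].
  by move=> i; rewrite mulf_neq0 ?invr_eq0.
move=> hr hc j; split.
  by rewrite -(hrho (s j)) -hr !permM permK.
by apply: divr1_eq; have := hc (s j); rewrite permK.
Qed.

Lemma norm_of_K s t : (forall i, t i != 0) -> Kfwd s t -> Kbwd s ->
  forall x, Ppar n lam x <->
    Ppar n lam (monomial_mx n s t *m x *m invmx (monomial_mx n s t)).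
Proof.
move=> nz K1 K2 x; split; first exact: conj_P.
have U := mono_unit s nz.
move=> /(conj_P (s := (s^-1)%g) (t := minv s t) (minv_nz s nz)).
rewrite -mono_inv // invmxK !mulmxA mulVmx // mul1mx -mulmxA mulVmx // mulmx1.
apply.
move=> a b hab.
have hab' : bl (s^-1%g a) = bl (s^-1%g b) by apply: K2; rewrite !permKV.
split => //; rewrite /minv; by have [_ ->] := K1 _ _ hab'.
Qed.

Lemma K_of_norm s t : (forall i, t i != 0) ->
  (forall x, Ppar n lam x <->
    Ppar n lam (monomial_mx n s t *m x *m invmx (monomial_mx n s t))) ->
  Kfwd s t /\ Kbwd s.
Proof.
move=> nz N; split.
  move=> a b hab.
  have P1 : Ppar n lam (monomial_mx n (tperm a b) (fun _ => 1)).
    exists (tperm a b); split => // j.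
    case: (tpermP a b j) => [->|->|] //; by rewrite ?hab.
  have := conj_Pinv nz (proj1 (N _) P1) a; rewrite tpermL => -[h1 h2].
  by split.
move=> a b hab.
set y := monomial_mx n (tperm (s a) (s b)) (fun _ => 1).
have P1 : Ppar n lam y.
  exists (tperm (s a) (s b)); split => // j.
  case: (tpermP (s a) (s b) j) => [->|->|] //; by rewrite ?hab.
have U := mono_unit s nz.
have P2 : Ppar n lam (invmx (monomial_mx n s t) *m y *m monomial_mx n s t).
  apply/N; rewrite !mulmxA mulmxV // mul1mx -mulmxA mulmxV // mulmx1 //.
have P3 : Ppar n lam (monomial_mx n (s^-1)%g (minv s t) *m y *m
    invmx (monomial_mx n (s^-1)%g (minv s t))) by rewrite -mono_inv // invmxK.
have := conj_Pinv (minv_nz s nz) P3 (s a).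
rewrite tpermL !permK => -[h _]; by [].
Qed.

End Mono.

Lemma N1_neq1 : (-1 : algC) != 1.
Proof. by rewrite -subr_eq0 -opprD oppr_eq0 -(natrD _ 1 1) pnatr_eq0. Qed.

Section Alg.
Variable n : nat.

Lemma ev_cmp (al be ze : algC) (a b c d : 'I_n) : a != b -> c != d -> al != 0 -> ze != 0 ->
  al *: ev a - be *: ev b = ze *: (ev c - ev d) ->
  (a = c /\ b = d /\ al = ze /\ be = ze) \/ (a = d /\ b = c /\ al = - ze /\ be = - ze).
Proof.
move=> hab hcd hal hze h.
have E x : al * (x == a)%:R - be * (x == b)%:R = ze * ((x == c)%:R - (x == d)%:R).
  by have := congr1 (fun M : 'cV_n => M x 0) h; rewrite !mxE.
have Ea := E a; rewrite eqxx (negPf hab) mulr0 subr0 mulr1 in Ea.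
case: (eqVneq a c) => [ac|nac].
  subst c; rewrite eqxx in Ea.
  have nad : a != d by apply: contraNneq hcd => ->.
  have nda : (d == a) = false by rewrite eq_sym (negPf nad).
  rewrite (negPf nad) subr0 mulr1 in Ea.
  have Ed := E d; rewrite nda eqxx /= mulr0n mulr1n mulr0 !sub0r mulrN1 in Ed.
  case: (eqVneq d b) => [db|ndb].
    subst d; rewrite eqxx /= mulr1n mulr1 in Ed; left; do 3!split => //.
    by apply: oppr_inj.
  by move: Ed; rewrite (negPf ndb) /= mulr0n mulr0 oppr0 => /esym/eqP; rewrite oppr_eq0 (negPf hze).
case: (eqVneq a d) => [ad|nad].
  subst d; rewrite eqxx (negPf nac) sub0r mulrN1 in Ea.
  have nca : (c == a) = false by rewrite eq_sym (negPf nac).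
  have Ec := E c; rewrite nca eqxx /= mulr0n mulr1n mulr0 sub0r subr0 mulr1 in Ec.
  case: (eqVneq c b) => [cb|ncb].
    subst c; rewrite eqxx /= mulr1n mulr1 in Ec; right; do 3!split => //.
    by rewrite -Ec opprK.
  by move: Ec; rewrite (negPf ncb) /= mulr0n mulr0 oppr0 => /esym/eqP; rewrite (negPf hze).
by move: Ea; rewrite (negPf nac) (negPf nad) subr0 mulr0 => /eqP; rewrite (negPf hal).
Qed.

Lemma mono_apply s t (x : 'cV[algC]_n) j :
  (monomial_mx n s t *m x) j 0 = t (s^-1%g j) * x (s^-1%g j) 0.
Proof.
rewrite !mxE (bigD1 (s^-1%g j)) //= big1 ?addr0.
  by rewrite !mxE permKV eqxx.
move=> i hi; rewrite !mxE; case: eqP => [e|]; last by rewrite mul0r.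
by move: hi; rewrite e permK eqxx.
Qed.

Lemma refl_tperm (a b : 'I_n) : a != b ->
  is_reflection n (monomial_mx n (tperm a b) (fun _ => 1)).
Proof.
move=> hab; rewrite /is_reflection.
set u := ev a - ev b.
have E : monomial_mx n (tperm a b) (fun _ => 1) - 1%:M = u *m (- u^T).
  apply/matrixP => j i; rewrite !mxE big_ord1 !mxE.
  have hba : (b == a) = false by rewrite eq_sym (negPf hab).
  case: tpermP => [->|->|/eqP hia /eqP hib].
  - rewrite eqxx (negPf hab); case: (j == a); case: (j == b); rewrite /=; ring.
  - rewrite eqxx hba; case: (j == a); case: (j == b); rewrite /=; ring.
  - rewrite (negPf hia) (negPf hib) /=; case: (j == i); rewrite /=; ring.
have ne : \rank (monomial_mx n (tperm a b) (fun _ => 1) - 1%:M) != 0%N.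
  rewrite mxrank_eq0; apply/eqP => /matrixP /(_ a a); rewrite !mxE tpermL.
  by rewrite (negPf hab) eqxx /= sub0r => /eqP; rewrite oppr_eq0 oner_eq0.
have le : (\rank (monomial_mx n (tperm a b) (fun _ => 1) - 1%:M)%R <= 1)%N.
  by rewrite E; apply: leq_trans (mxrankM_maxl _ _) (rank_leq_col _).
by apply/eqP; rewrite eqn_leq le lt0n ne.
Qed.

Lemma root_tperm (a b : 'I_n) (ze : algC) : a != b -> ze != 0 ->
  is_root_of n (monomial_mx n (tperm a b) (fun _ => 1)) (ze *: (ev a - ev b)).
Proof.
move=> hab hze; split.
  apply/eqP => /matrixP /(_ a 0); rewrite !mxE eqxx (negPf hab) subr0 mulr1.
  by move/eqP; rewrite (negPf hze).
move=> x hx.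
have xab : x a 0 = x b 0.
  by rewrite -{2}hx mono_apply tpermV tpermR mul1r.
rewrite /herm (bigD1 a) //= (bigD1 b) 1?eq_sym //= big1 ?addr0.
  rewrite !mxE !eqxx (negPf hab) eq_sym (negPf hab) xab subr0 sub0r mulr1 mulrN1.
  by rewrite rmorphN mulNr addrN.
move=> i /andP [hia hib]; rewrite !mxE (negPf hia) (negPf hib) subrr mulr0.
by rewrite conjC0 mul0r.
Qed.

Lemma stab_of_map (J : seq 'cV[algC]_n) (h : 'M[algC]_n) : h \in unitmx ->
  (forall v, v \in J -> h *m v \in J) -> forall v, (v \in J) = (h *m v \in J).
Proof.
move=> hU hJ v; apply/idP/idP; first exact: hJ.
set S := undup J.
have inj : injective (fun w : 'cV[algC]_n => h *m w) by move=> u w e /=; rewrite -(mulKmx hU u) e mulKmx.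
have U : uniq (map (fun w : 'cV[algC]_n => h *m w) S) by rewrite map_inj_uniq ?undup_uniq.
have sub : {subset map (fun w : 'cV[algC]_n => h *m w) S <= S}.
  by move=> w /mapP [u]; rewrite !mem_undup => hu ->; apply: hJ.
have [_ eqS] := uniq_min_size U sub (eq_leq (esym (size_map _ _))).
move=> hv; have : h *m v \in S by rewrite mem_undup.
rewrite -eqS => /mapP [w hw e].
have -> : v = w by apply: inj.
by rewrite -mem_undup.
Qed.

End Alg.

Definition Jset n lam k (z : algC) : seq 'cV[algC]_n :=
  [seq (z ^+ (nat_of_ord q.1)) *: (ev q.2.1 - ev q.2.2) |
    q : 'I_k * ('I_n * 'I_n) <- enum [pred q : 'I_k * ('I_n * 'I_n) |
               (q.2.1 < q.2.2)%N && (blk lam q.2.1 == blk lam q.2.2)]].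

Arguments Jset : clear implicits.

Lemma inJ n lam k z (v : 'cV[algC]_n) : k.-primitive_root z ->
  (v \in Jset n lam k z) <-> exists ze (a b : 'I_n), ze ^+ k = 1 /\ (a < b)%N /\
     blk lam a = blk lam b /\ v = ze *: (ev a - ev b).
Proof.
move=> hz; split.
  move=> /mapP [[i [a b]]]; rewrite mem_enum inE /= => /andP [hab /eqP e] ->.
  exists (z ^+ i), a, b; split; last by [].
  by rewrite exprAC (prim_expr_order hz) expr1n.
move=> [ze [a [b [hze [hab [e ->]]]]]].
have [i ->] := prim_rootP hz hze.
apply/mapP; exists (i, (a, b)) => //.
by rewrite mem_enum inE /= hab e eqxx.
Qed.

Lemma nz_root (k : nat) (ze : algC) : (0 < k)%N -> ze ^+ k = 1 -> ze != 0.
Proof.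
move=> k0 h; apply/eqP => e; move: h; rewrite e expr0n.
by case: k k0 => // k _ /eqP; rewrite eq_sym oner_eq0.
Qed.

Theorem corollary4 (m p n : nat) (lam : seq nat) :
  (0 < m)%N -> (0 < p)%N -> (0 < n)%N -> (p %| m)%N ->
  (odd m \/ exists k, odd k /\ m = (2 * k)%N) ->
  is_partition n lam ->
  exists J : seq 'cV[algC]_n,
    (forall v, v \in J ->
       exists r, Ppar n lam r /\ is_reflection n r /\ is_root_of n r v) /\
    (forall g, NormGP m p n lam g <->
       exists x h, Ppar n lam x /\ StabGJ m p n J h /\ g = x *m h) /\
    (forall g, Ppar n lam g -> StabGJ m p n J g -> g = 1%:M).
Proof.
move=> hm hp hn hpm hodd hpart.
have [k [k0 [ko hk]]] : exists k, (0 < k)%N /\ odd k /\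
    forall th : algC, th ^+ m = 1 -> th ^+ k = 1 \/ th ^+ k = -1.
  case: hodd => [om | [k [ok em]]].
    by exists m; split => //; split => // th ->; left.
  exists k; split; first by case: k ok em.
  split => // th h.
  have : (th ^+ k) ^+ 2 == 1 by rewrite -exprM mulnC -em h.
  by rewrite sqrf_eq1 => /orP [/eqP ->|/eqP ->]; [left|right].
have [z hz] := C_prim_root_exists k0.
have Nk : (-1 : algC) ^+ k = -1 by rewrite -signr_odd ko.
have nzm : forall th : algC, th ^+ m = 1 -> th != 0 by move=> th; apply: nz_root.
set J := Jset n lam k z.
exists J; split; [|split].
- move=> v /(inJ _ _ hz) [ze [a [b [hze [hab [e ->]]]]]].
  have nab : a != b by apply/eqP => ab; move: hab; rewrite ab ltnn.
  exists (monomial_mx n (tperm a b) (fun _ => 1)); split; [|split].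
  + exists (tperm a b); split => // j.
    by case: tpermP => [->|->|]; rewrite ?e.
  + exact: refl_tperm.
  + by apply: root_tperm => //; apply: nz_root hze.
- move=> g; split.
  + move=> [[sg [th [hth [hprod eg]]]] hN]; subst g.
    have nz : forall i, th i != 0 by move=> i; apply: nzm.
    have [K1 K2] := K_of_norm nz hN.
    pose r := fun i => th i ^+ k != 1.
    have K1' : forall a b : 'I_n, blk lam a = blk lam b -> blk lam (sg a) = blk lam (sg b).
      by move=> a b e; case: (K1 a b e).
    have hr : forall a b : 'I_n, blk lam a = blk lam b -> r a = r b.
      by move=> a b e; rewrite /r; case: (K1 a b e) => _ ->.
    pose ta := tau K1' K2 hr.
    exists (monomial_mx n (ta^-1 * sg)%g (fun _ => 1)), (monomial_mx n ta th).
    split; [|split].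
    * exists (ta^-1 * sg)%g; split => // j.
      by rewrite permM -(tau_blk K1' K2 hr) permKV.
    * split; first by exists ta, th.
      apply: stab_of_map; first exact: mono_unit.
      move=> v /(inJ _ _ hz) [ze [a [b [hze [hab [e ->]]]]]]; apply/(inJ _ _ hz).
      rewrite -scalemxAr mulmxBr !mono_ev.
      have [_ tab] := K1 a b e; rewrite -tab.
      have hbl : blk lam (ta a) = blk lam (ta b) by rewrite !tau_blk; exact (K1' _ _ e).
      have := tau_ord K1' K2 hr hab e.
      rewrite /r; case: (hk _ (hth a)) => hka; rewrite hka ?eqxx ?N1_neq1 /= => ho.
      -- exists (ze * th a), (ta a), (ta b); split; first by rewrite exprMn hze hka mulr1.
         by split => //; split => //; rewrite -scalerBr scalerA.
      -- exists (- (ze * th a)), (ta b), (ta a); split.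
           by rewrite exprNn exprMn hze hka Nk mul1r mulrN1 opprK.
         split => //; split => //.
         by rewrite -scalerBr scalerA scaleNr -scalerN opprB.
    * rewrite mono_mul; apply: mono_ext => [|i]; first by rewrite mulVKg.
      by rewrite mul1r.
  + move=> [x [h [[pi [hpi ->]] [[[ta [th [hth [hprod eh]]]] hst] ->]]]].
    subst h.
    have nz : forall i, th i != 0 by move=> i; apply: nzm.
    have Kf : forall a b : 'I_n, (a < b)%N -> blk lam a = blk lam b ->
        blk lam (ta a) = blk lam (ta b) /\ th a = th b.
      move=> a b hab e.
      have vJ : 1 *: (ev a - ev b) \in J by apply/(inJ _ _ hz); exists 1, a, b; split; [exact: expr1n | split => //].
      rewrite hst -scalemxAr mulmxBr !mono_ev scale1r in vJ.
      move/(inJ _ _ hz): vJ => [ze [c [d [hze [hcd [ecd e2]]]]]].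
      have nab : ta a != ta b.
        by rewrite (inj_eq perm_inj); apply/eqP => ab; move: hab; rewrite ab ltnn.
      have ncd : c != d by apply/eqP => cd; move: hcd; rewrite cd ltnn.
      case: (ev_cmp nab ncd (nz a) (nz_root k0 hze) e2).
        by move=> [-> [-> [-> ->]]].
      by move=> [-> [-> [-> ->]]].
    have Kfw : Kfwd lam ta th.
      move=> a b e; case: (ltngtP a b) => [ab|ab|ab].
      + exact: Kf.
      + by have [h1 h2] := Kf b a ab (esym e).
      + by rewrite (ord_inj ab).
    have Kb : forall a b : 'I_n, (ta a < ta b)%N -> blk lam (ta a) = blk lam (ta b) ->
        blk lam a = blk lam b.
      move=> a b hab e.
      have wJ : 1 *: (ev (ta a) - ev (ta b)) \in J.
        by apply/(inJ _ _ hz); exists 1, (ta a), (ta b); split; [exact: expr1n | split => //].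
      have hv : monomial_mx n ta th *m ((th a)^-1 *: ev a - (th b)^-1 *: ev b)
          = 1 *: (ev (ta a) - ev (ta b)).
        by rewrite mulmxBr -scalemxAr -scalemxAr !mono_ev !scalerA !mulVf // !scale1r.
      move: wJ; rewrite -hv -hst => /(inJ _ _ hz) [ze [c [d [hze [hcd [ecd e2]]]]]].
      have nab : a != b.
        by apply/eqP => ab; move: hab; rewrite ab ltnn.
      have ncd : c != d by apply/eqP => cd; move: hcd; rewrite cd ltnn.
      case: (ev_cmp nab ncd _ (nz_root k0 hze) e2); first by rewrite invr_eq0.
        by move=> [-> [-> _]].
      by move=> [-> [-> _]].
    have Kbw : Kbwd lam ta.
      move=> a b e; case: (ltngtP (ta a) (ta b)) => [ab|ab|ab].
      + exact: Kb.
      + by apply/esym; apply: Kb => //; rewrite e.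
      + by rewrite (perm_inj (ord_inj ab)).
    have eg : monomial_mx n pi (fun _ => 1) *m monomial_mx n ta th =
        monomial_mx n (ta * pi)%g th.
      by rewrite mono_mul; apply: mono_ext => // i; rewrite mul1r.
    rewrite eg; split; first by exists (ta * pi)%g, th.
    apply: norm_of_K => //.
      move=> a b e; have [h1 h2] := Kfw a b e; split => //.
      by rewrite !permM !hpi.
    by move=> a b; rewrite !permM !hpi; apply: Kbw.
- move=> g [pi [hpi ->]] [_ hst].
  have ho : forall a b : 'I_n, (a < b)%N -> blk lam a = blk lam b -> (pi a < pi b)%N.
    move=> a b hab e.
    have vJ : 1 *: (ev a - ev b) \in J by apply/(inJ _ _ hz); exists 1, a, b; split; [exact: expr1n | split => //].
    rewrite hst scale1r mulmxBr !mono_ev in vJ.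
    move/(inJ _ _ hz): vJ => [ze [c [d [hze [hcd [ecd e2]]]]]].
    have nab : pi a != pi b.
      by rewrite (inj_eq perm_inj); apply/eqP => ab; move: hab; rewrite ab ltnn.
    have ncd : c != d by apply/eqP => cd; move: hcd; rewrite cd ltnn.
    case: (ev_cmp nab ncd (oner_neq0 _) (nz_root k0 hze) e2).
      by move=> [-> [-> _]].
    move=> [_ [_ [h1 _]]].
    have : ze = -1 by rewrite -[ze]opprK -h1.
    by move=> ez; move: hze; rewrite ez Nk => /eqP; rewrite (negPf N1_neq1).
  have -> := ordpres_id hpi ho.
  by rewrite -mono1.
Qed.
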